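(* Let $n,k$ be integers with $1\le k\le n-2$ and let $c_0,\dots,c_{n-1}$ be real constants. For an ordered bid vector $b_1\ge\dots\ge b_n\ge 0$ define $r_i=c_0+c_1b_1+\dots+c_{i-1}b_{i-1}+c_ib_{i+1}+\dots+c_{n-1}b_n$ for $i=1,\dots,n$. If $r_n\ge 0$ for every ordered bid vector, then the corresponding TFRM is individually rational for users (IR$_u$): under truthful bidding, every included user has nonnegative utility for every ordered bid vector.
   Context: TFRM: the block includes $n$ transactions with bids ordered $b_1\ge\dots\ge b_n$ (truthful, $b_i=\theta_i$ the valuation); users $1,\dots,k$ are confirmed and each pays $b_{k+1}-r_i$; users $j\in\{k+1,\dots,n\}$ are included but unconfirmed and pay $-r_j$. User utility is $u_i=\mathbb{1}[i\text{ confirmed}]\,\theta_i-p_i$. *)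

(* Defs.v *)
From mathcomp Require Import all_boot all_order all_algebra.
Set Implicit Arguments. Unset Strict Implicit. Unset Printing Implicit Defensive.
Import Order.TTheory GRing.Theory Num.Theory.
Local Open Scope ring_scope.

(* Users / bids are 1-indexed: b 1 >= b 2 >= ... >= b n >= 0.
   Constants c 0, ..., c (n-1). Values of b, c outside these ranges are irrelevant. *)

Definition ordered_bids (R : realFieldType) (n : nat) (b : nat -> R) : Prop :=
  (forall i j : nat, (1 <= i)%N -> (i <= j)%N -> (j <= n)%N -> b j <= b i)
  /\ 0 <= b n.

Definition rebate (R : realFieldType) (n : nat) (c : nat -> R) (b : nat -> R)
    (i : nat) : R :=
  c 0%N + \sum_(1 <= j < i) c j * b j + \sum_(i <= j < n) c j * b j.+1.

(* TFRM payment: confirmed users 1..k pay b_{k+1} - r_i; included unconfirmed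
   users k+1..n pay -r_i. *)
Definition payment (R : realFieldType) (n k : nat) (c : nat -> R) (b : nat -> R)
    (i : nat) : R :=
  if (i <= k)%N then b k.+1 - rebate n c b i else - rebate n c b i.

Definition utility (R : realFieldType) (n k : nat) (c : nat -> R) (theta b : nat -> R)
    (i : nat) : R :=
  (if (i <= k)%N then theta i else 0) - payment n k c b i.

Definition IR_u (R : realFieldType) (n k : nat) (c : nat -> R) : Prop :=
  forall b : nat -> R, ordered_bids n b ->
    forall i : nat, (1 <= i)%N -> (i <= n)%N -> 0 <= utility n k c b b i.

(* Main.v *)
Require Import Defs.
From mathcomp Require Import all_boot all_order all_algebra.
From mathcomp Require Import zify ring.
Import Order.TTheory GRing.Theory Num.Theory.
Local Open Scope ring_scope.

Lemma rebate_shift (R : realFieldType) (n : nat) (c b : nat -> R) (i : nat) :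
  (1 <= i)%N -> (i <= n)%N ->
  rebate n c (fun j => if (j < i)%N then b j else b (minn j.+1 n)) n
  = rebate n c b i.
Proof.
move=> h1 h2; rewrite /rebate (@big_geq _ _ _ n n) // addr0 -addrA; congr (_ + _).
rewrite (@big_cat_nat _ _ _ i) //=; congr (_ + _).
  apply: eq_big_nat => j /andP[_ hj]; by rewrite hj.
apply: eq_big_nat => j /andP[hj hj2].
have -> : (j < i)%N = false by lia.
have -> : minn j.+1 n = j.+1 by lia.
by [].
Qed.

Theorem claim1 (R : realFieldType) (n k : nat) (c : nat -> R) :
  (1 <= k)%N -> (k <= n - 2)%N ->
  (forall b : nat -> R, ordered_bids n b -> 0 <= rebate n c b n) ->
  IR_u n k c.
Proof.
move=> hk hkn H b [hb hb0] i hi hin.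
have Hr : 0 <= rebate n c b i.
  rewrite -rebate_shift //; apply: H; split.
    move=> i' j' h1 h2 h3.
    case: (ltnP j' i) => hj; case: (ltnP i' i) => hi'.
    - exact: hb.
    - lia.
    - apply: hb => //; lia.
    - apply: hb; lia.
  have -> : (n < i)%N = false by lia.
  by rewrite (_ : minn n.+1 n = n) //; lia.
rewrite /utility /payment.
case: ifP => hik.
  have hb' : b k.+1 <= b i by apply: hb; lia.
  rewrite opprB; rewrite (_ : b i + (rebate n c b i - b k.+1) = (b i - b k.+1) + rebate n c b i); last by ring.
  by rewrite addr_ge0 // subr_ge0.
by rewrite opprK add0r.
Qed.
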